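(* Let $H=(V,F)$ be a finite hypergraph with directed edge set $\vec E$. Let $(r_i)_{i\in V}$ be positive integers and, for each $\alpha\in F$ and distinct $i,j\in\alpha$, let $u^\alpha_{i\to j}\in\mathbb{C}^{r_j\times r_i}$. Put $r_e=r_{t(e)}$ and $u_{e'\rightharpoonup e}=u^{s(e)}_{t(e')\to t(e)}$, and let $\mathcal M(\boldsymbol u)$ be the operator on $\bigoplus_{e\in\vec E}\mathbb{C}^{r_e}$ given by $(\mathcal M(\boldsymbol u)f)(e)=\sum_{e':e'\rightharpoonup e}u_{e'\rightharpoonup e}f(e')$. For $\alpha=\{i_1,\dots,i_{d_\alpha}\}\in F$ let $U_\alpha$ be the block matrix with blocks indexed by $\alpha\times\alpha$ whose $(i,i)$ block is $I_{r_i}$ and whose $(i,j)$ block ($i\ne j$) is $u^\alpha_{j\to i}$; assume each $U_\alpha$ is invertible and write $W_\alpha=U_\alpha^{-1}$, with $(i,j)$ block denoted $w^\alpha_{j\to i}\in\mathbb{C}^{r_i\times r_j}$ (including $i=j$). Define linear operators $\mathcal D,\mathcal W$ on $\bigoplus_{i\in V}\mathbb{C}^{r_i}$ by $$(\mathcal Dg)(i)=d_i\,g(i),\qquad (\mathcal Wg)(i)=\sum_{\substack{e,e'\in\vec E\\ t(e)=i,\ s(e)=s(e')}}w^{s(e)}_{t(e')\to i}\,g(t(e')).$$ Then, with $r_V=\sum_{i\in V}r_i$, $$\zeta_H(\boldsymbol u)^{-1}=\det(I-\mathcal M(\boldsymbol u))=\det\big(I_{r_V}-\mathcal D+\mathcal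 W\big)\prod_{\alpha\in F}\det U_\alpha .$$
   Context: A finite hypergraph $H=(V,F)$: $V$ finite, $F$ a finite set of nonempty subsets of $V$; $d_i=|\{\alpha\in F: i\in\alpha\}|$, $d_\alpha=|\alpha|$. Directed edges $\vec E=\{(\alpha\to i): i\in\alpha\in F\}$ with $s(\alpha\to i)=\alpha$, $t(\alpha\to i)=i$. Write $e'\rightharpoonup e$ if $t(e')\in s(e)$, $t(e')\ne t(e)$, $s(e')\ne s(e)$. Closed geodesics are sequences $(e_1,\dots,e_k)$ with $e_l\rightharpoonup e_{l+1}$ cyclically; prime cycles are cyclic-permutation classes of closed geodesics that are not $m$-fold repetitions ($m\ge2$) of shorter ones; $\pi(e_1,\dots,e_k)=u_{e_k\rightharpoonup e_1}\cdots u_{e_1\rightharpoonup e_2}$; the graph zeta function is $\zeta_H(\boldsymbol u)=\prod_{\mathfrak p}\det(I-\pi(\mathfrak p))^{-1}$, its reciprocal being understood as the formal power series $\det(I-\mathcal M(\boldsymbol u))$. *)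

(* Defs.v *)
From HB Require Import structures.
From mathcomp Require Import all_boot all_order all_algebra.
From mathcomp Require Import complex.
From mathcomp Require Import reals.
Set Implicit Arguments. Unset Strict Implicit. Unset Printing Implicit Defensive.
Import Order.TTheory GRing.Theory Num.Theory.
Local Open Scope ring_scope.

(* Determinant of a square matrix indexed by an arbitrary finite type T
   (transported to 'M_#|T| along the canonical enumeration of T;
    the value does not depend on the ordering). *)
Definition fmx (R : nzRingType) (T : finType) (A : T -> T -> R) : 'M[R]_#|T| :=
  \matrix_(i < #|T|, j < #|T|) A (enum_val i) (enum_val j).
Definition fdet (R : comNzRingType) (T : finType) (A : T -> T -> R) : R :=
  \det (fmx A).

Section Hyper.
Variables (V : finType) (F : {set {set V}}).

Definition dedgeP (p : {set V} * V) : bool := (p.1 \in F) && (p.2 \in p.1).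
Definition dedge : finType := {p : {set V} * V | dedgeP p}.
Definition src (e : dedge) : {set V} := (val e).1.
Definition tgt (e : dedge) : V := (val e).2.

Definition follows (e' e : dedge) : bool :=
  [&& tgt e' \in src e, tgt e' != tgt e & src e' != src e].

Definition vdeg (i : V) : nat := #|[set a in F | i \in a]|.

Variables (R : realType) (r : V -> nat)
          (u : forall (a : {set V}) (i j : V), 'M[R[i]]_(r j, r i)).
Local Notation C := R[i].

(* index set of  (+)_{e in E} C^{r_e} *)
Definition Eidx : finType := {e : dedge & 'I_(r (tgt e))}.
(* index set of  (+)_{i in V} C^{r_i} *)
Definition Vidx : finType := {i : V & 'I_(r i)}.

Definition Mop (x y : Eidx) : C :=
  let e := tag x in let e' := tag y in
  if follows e' e then (u (src e) (tgt e') (tgt e)) (tagged x) (tagged y) else 0.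

Definition idmx_op (T : finType) (x y : T) : C := (x == y)%:R.

(* index set of the block matrix U_alpha *)
Definition Aidx (a : {set V}) : finType := {x : Vidx | tag x \in a}.

Definition Uop (a : {set V}) (x y : Aidx a) : C :=
  let i := tag (val x) in let j := tag (val y) in
  if i == j then (val (tagged (val x)) == val (tagged (val y)))%:R
  else (u a j i) (tagged (val x)) (tagged (val y)).

Definition Umx (a : {set V}) : 'M[C]_#|Aidx a| := fmx (@Uop a).

Definition wblk (a : {set V}) (i j : V) (p : 'I_(r i)) (q : 'I_(r j)) : C :=
  match @insub _ (fun x : Vidx => tag x \in a) _ (Tagged (fun k => 'I_(r k)) p),
        @insub _ (fun x : Vidx => tag x \in a) _ (Tagged (fun k => 'I_(r k)) q) with
  | Some x, Some y => (invmx (Umx a)) (enum_rank x) (enum_rank y)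
  | _, _ => 0
  end.

Definition Dop (x y : Vidx) : C := (x == y)%:R * (vdeg (tag x))%:R.

Definition Wop (x y : Vidx) : C :=
  \sum_(e : dedge | tgt e == tag x)
   \sum_(e' : dedge | (src e' == src e) && (tgt e' == tag y))
      wblk (src e) (tagged x) (tagged y).

End Hyper.

(* Main.v *)
Require Import Defs.
From HB Require Import structures.
From mathcomp Require Import all_boot all_order all_algebra.
From mathcomp Require Import complex.
From mathcomp Require Import reals.
Import Order.TTheory GRing.Theory Num.Theory.
Local Open Scope ring_scope.


From HB Require Import structures.
From mathcomp Require Import all_boot all_order all_algebra.
From mathcomp Require Import fingroup perm.
Set Implicit Arguments. Unset Strict Implicit. Unset Printing Implicit Defensive.
Import Order.TTheory GRing.Theory Num.Theory.
Local Open Scope ring_scope.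

Section Gen.
Variable R : comNzRingType.

Definition fmxr (T1 T2 : finType) (A : T1 -> T2 -> R) : 'M[R]_(#|T1|, #|T2|) :=
  \matrix_(i < #|T1|, j < #|T2|) A (enum_val i) (enum_val j).

Lemma fmxr_mul (T1 T2 T3 : finType) (A : T1 -> T2 -> R) (B : T2 -> T3 -> R) :
  fmxr (fun x y => \sum_z A x z * B z y) = fmxr A *m fmxr B.
Proof.
apply/matrixP => i j; rewrite !mxE.
rewrite (big_enum_val (A := T2) (fun z => A (enum_val i) z * B z (enum_val j))).
by apply: eq_bigr => k _; rewrite !mxE.
Qed.

Lemma fmxr_sub (T1 T2 : finType) (A B : T1 -> T2 -> R) :
  fmxr (fun x y => A x y - B x y) = fmxr A - fmxr B.
Proof. by apply/matrixP => i j; rewrite !mxE. Qed.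

Lemma fmxr_add (T1 T2 : finType) (A B : T1 -> T2 -> R) :
  fmxr (fun x y => A x y + B x y) = fmxr A + fmxr B.
Proof. by apply/matrixP => i j; rewrite !mxE. Qed.

Lemma fmxr_id (T : finType) :
  fmxr (fun x y : T => (x == y)%:R) = 1%:M.
Proof. by apply/matrixP => i j; rewrite !mxE (inj_eq enum_val_inj). Qed.

Lemma fmxr_ext (T1 T2 : finType) (A B : T1 -> T2 -> R) :
  (forall x y, A x y = B x y) -> fmxr A = fmxr B.
Proof. by move=> h; apply/matrixP => i j; rewrite !mxE h. Qed.

Lemma sylvester m n (A : 'M[R]_(m, n)) (B : 'M[R]_(n, m)) :
  \det (1%:M - A *m B) = \det (1%:M - B *m A).
Proof.
have e1 : block_mx 1%:M A B 1%:M =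
   block_mx 1%:M 0 B 1%:M *m block_mx 1%:M A 0 (1%:M - B *m A).
  rewrite mulmx_block ?mul1mx ?mul0mx ?mulmx0 ?addr0 ?add0r ?mulmx1.
  by rewrite addrC subrK.
have e2 : block_mx 1%:M A B 1%:M =
   block_mx 1%:M A 0 1%:M *m block_mx (1%:M - A *m B) 0 B 1%:M.
  rewrite mulmx_block ?mul1mx ?mul0mx ?mulmx0 ?addr0 ?add0r ?mulmx1.
  by rewrite subrK.
have d1 : \det (block_mx 1%:M A B 1%:M) = \det (1%:M - B *m A).
  by rewrite e1 det_mulmx det_lblock det_ublock !det1 !mul1r.
have d2 : \det (block_mx 1%:M A B 1%:M) = \det (1%:M - A *m B).
  by rewrite e2 det_mulmx det_lblock det_ublock !det1 !mul1r mulr1.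
by rewrite -d2 d1.
Qed.

Lemma det_reindex n (B : 'M[R]_n) (h : 'I_n -> 'I_n) :
  injective h -> \det (\matrix_(i, j) B (h i) (h j)) = \det B.
Proof.
move=> hi; pose s := perm hi.
have -> : \matrix_(i, j) B (h i) (h j) = perm_mx s *m B *m perm_mx s^-1.
  rewrite -row_permE -col_permE; apply/matrixP => i j; rewrite !mxE.
  by rewrite !permE.
by rewrite !det_mulmx !det_perm odd_permV mulrC mulrA -signr_addb addbb mul1r.
Qed.

End Gen.

From HB Require Import structures.
From mathcomp Require Import all_boot all_order all_algebra.
From mathcomp Require Import fingroup perm.
Set Implicit Arguments. Unset Strict Implicit. Unset Printing Implicit Defensive.
Import Order.TTheory GRing.Theory Num.Theory.
Local Open Scope ring_scope.

Section PD.
Variable R : comNzRingType.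

Definition pdet (T : finType) (P : {set T}) (A : T -> T -> R) : R :=
  \det (\matrix_(i < #|P|, j < #|P|) A (enum_val i) (enum_val j)).

Lemma pdet_bij (T : finType) (P : {set T}) (A : T -> T -> R) n (g : 'I_n -> T) :
  injective g -> (forall i, g i \in P) -> (forall x, x \in P -> exists i, x = g i) ->
  pdet P A = \det (\matrix_(i, j) A (g i) (g j)).
Proof.
move=> gi gP gs.
have cP : #|P| = n.
  have -> : P = [set g i | i in 'I_n].
    apply/setP => x; apply/idP/imsetP => [/gs [i ->]|[i _ ->]]; last exact: gP.
    by exists i.
  by rewrite card_imset // card_ord.
subst n; rewrite /pdet.
pose h i := enum_rank_in (gP i) (g i).
have hE i : enum_val (h i) = g i by rewrite /h enum_rankK_in ?gP.
have hi : injective h by move=> i j e; apply: gi; rewrite -hE e hE.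
rewrite -(det_reindex _ hi); congr (\det _); apply/matrixP => i j.
by rewrite !mxE !hE.
Qed.

Lemma det0 n (M : 'M[R]_n) : n = 0%N -> \det M = 1.
Proof. by move=> e; subst n; exact: det_mx00. Qed.

Lemma pdet0 (T : finType) (A : T -> T -> R) : pdet set0 A = 1.
Proof. exact/det0/cards0. Qed.

Lemma pdet_split (T : finType) (Q P : {set T}) (A : T -> T -> R) :
  (forall x y, x \in Q :\: P -> y \in Q :&: P -> A x y = 0) ->
  pdet Q A = pdet (Q :&: P) A * pdet (Q :\: P) A.
Proof.
move=> H0.
pose g' (k : 'I_#|Q :&: P| + 'I_#|Q :\: P|) : T :=
  match k with inl i => enum_val i | inr j => enum_val j end.
pose g k := g' (split k).
have g'P k : g' k \in Q.
  by case: k => i /=; have := enum_valP i; rewrite !inE => /andP[].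
have g'i : injective g'.
  case=> i [] j /=.
  - by move=> ev; rewrite (enum_val_inj ev).
  - move=> ev; have := enum_valP i; have := enum_valP j; rewrite -ev !inE.
    by case: (enum_val i \in P); rewrite ?andbF.
  - move=> ev; have := enum_valP i; have := enum_valP j; rewrite -ev !inE.
    by case: (enum_val i \in P); rewrite ?andbF.
  - by move=> ev; rewrite (enum_val_inj ev).
rewrite (@pdet_bij _ _ _ _ g).
- rewrite /pdet -(det_ublock _ (\matrix_(i < #|Q :&: P|, j < #|Q :\: P|) A (enum_val i) (enum_val j))); congr (\det _); apply/matrixP => i j.
  rewrite -(splitK i) -(splitK j).
  case: (split i) => i'; case: (split j) => j'.
  + by rewrite block_mxEul !mxE /g (unsplitK (inl i')) (unsplitK (inl j')).
  + by rewrite block_mxEur !mxE /g (unsplitK (inl i')) (unsplitK (inr j')).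
  + rewrite block_mxEdl !mxE /g (unsplitK (inr i')) (unsplitK (inl j')) /=; apply: H0; exact: enum_valP.
  + by rewrite block_mxEdr !mxE /g (unsplitK (inr i')) (unsplitK (inr j')).
- by move=> i j /g'i /(can_inj splitK).
- by move=> i; exact: g'P.
- move=> x xQ; case xP: (x \in P).
  + have h : x \in Q :&: P by rewrite inE xQ xP.
    exists (unsplit (inl (enum_rank_in h x))).
    by rewrite /g unsplitK /= enum_rankK_in.
  + have h : x \in Q :\: P by rewrite inE xQ xP.
    exists (unsplit (inr (enum_rank_in h x))).
    by rewrite /g unsplitK /= enum_rankK_in.
Qed.

Lemma pdet_blocks (T K : finType) (c : T -> K) (A : T -> T -> R) :
  (forall x y, c x != c y -> A x y = 0) ->
  forall S : {set K},
  pdet (c @^-1: S) A = \prod_(k in S) pdet (c @^-1: [set k]) A.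
Proof.
move=> Hc S; move: {2}#|S| (leqnn #|S|) => n; elim: n S => [|n IH] S.
  rewrite leqn0 => /eqP/cards0_eq ->; rewrite big_set0.
  rewrite (_ : c @^-1: set0 = set0); first exact: pdet0.
  by apply/setP => x; rewrite !inE.
move=> Sn; case: (set_0Vmem S) => [->|[k kS]].
  rewrite big_set0 (_ : c @^-1: set0 = set0); first exact: pdet0.
  by apply/setP => x; rewrite !inE.
rewrite (bigD1 k) //= (pdet_split (P := c @^-1: [set k])).
  congr (_ * _).
    by congr pdet; apply/setP => x; rewrite !inE; case: eqP => [->|]; rewrite ?andbF ?kS.
  transitivity (pdet (c @^-1: (S :\ k)) A).
    by congr pdet; apply/setP => x; rewrite !inE andbC.
  rewrite IH; last by rewrite (cardsD1 k S) kS in Sn.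
  by apply: eq_bigl => i; rewrite !inE andbC.
move=> x y; rewrite !inE => /andP[xk _] /andP[_ yk].
apply: Hc; by rewrite (eqP yk).
Qed.

End PD.

From HB Require Import structures.
From mathcomp Require Import all_boot all_order all_algebra.
From mathcomp Require Import fingroup perm complex reals.
Set Implicit Arguments. Unset Strict Implicit. Unset Printing Implicit Defensive.
Import Order.TTheory GRing.Theory Num.Theory.
Local Open Scope ring_scope.

Section Hyp.
Variables (V : finType) (F : {set {set V}}) (R : realType) (r : V -> nat)
  (u : forall (a : {set V}) (k l : V), 'M[R[i]]_(r l, r k)).
Local Notation C := R[i].
Local Notation E := (Eidx F r).
Local Notation Vx := (Vidx r).
Local Notation D := (dedge F).

Definition sE (z : E) : {set V} := src (tag z).
Definition tE (z : E) : V := tgt (tag z).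
Definition pv (z : E) : Vx := Tagged (fun i => 'I_(r i)) (tagged z).

Lemma dedge_eq (e1 e2 : D) : src e1 = src e2 -> tgt e1 = tgt e2 -> e1 = e2.
Proof.
move=> h1 h2; apply: val_inj; move: h1 h2; rewrite /src /tgt.
by case: (val e1) => a i; case: (val e2) => b j /= -> ->.
Qed.

Lemma srcF (e : D) : src e \in F.
Proof. by case/andP: (valP e). Qed.

Lemma tgt_src (e : D) : tgt e \in src e.
Proof. by case/andP: (valP e). Qed.

Lemma Eidx_eq (z1 z2 : E) : sE z1 = sE z2 -> pv z1 = pv z2 -> z1 = z2.
Proof.
case: z1 => e1 p1; case: z2 => e2 p2; rewrite /sE /pv /= => hs hp.
have ht := congr1 tag hp; simpl in ht.
have ee := dedge_eq hs ht; subst e2.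
by rewrite (eq_from_Tagged hp).
Qed.

Lemma sumE (f : E -> C) :
  \sum_(z : E) f z = \sum_(e : D) \sum_(p : 'I_(r (tgt e))) f (Tagged _ p).
Proof.
symmetry; rewrite (sig_big_dep predT (fun _ => predT)
  (fun e (p : 'I_(r (tgt e))) => f (Tagged (fun e => 'I_(r (tgt e))) p))) /=.
by apply: eq_bigr => -[e p].
Qed.

Lemma sum_fiber (k : V) (x : Vx) (H : 'I_(r k) -> C) (c : C) :
  (forall p, Tagged (fun i => 'I_(r i)) p = x -> H p = c) ->
  \sum_(p : 'I_(r k)) (Tagged (fun i => 'I_(r i)) p == x)%:R * H p
    = (k == tag x)%:R * c.
Proof.
case: x => i px /= hH.
case: (k =P i) => [ki|nki].
  subst k; rewrite (bigD1 px) //= eqxx mul1r (hH px) // mul1r big1 ?addr0 //.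
  by move=> p /negbTE; rewrite eq_Tagged /= => ->; rewrite mul0r.
rewrite mul0r big1 // => p _.
case: eqP => [e|]; last by rewrite mul0r.
by case: nki; exact: (congr1 tag e).
Qed.

Lemma sum_ind (T : finType) (a : T) (f : T -> C) :
  \sum_t (a == t)%:R * f t = f a.
Proof.
rewrite (bigD1 a) //= eqxx mul1r big1 ?addr0 // => t /negbTE.
by rewrite eq_sym => ->; rewrite mul0r.
Qed.


Definition Sop (z : E) (w : Vx) : C := (pv z == w)%:R.
Definition STop (w : Vx) (z : E) : C := (pv z == w)%:R.
Definition uv a (x y : Vx) : C := (u a (tag y) (tag x)) (tagged x) (tagged y).
Definition wv a (x y : Vx) : C := wblk u a (tagged x) (tagged y).
Definition Ublk (x z : E) : C :=
  if sE x == sE z then (if tE x == tE z then (pv x == pv z)%:R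
                        else uv (sE x) (pv x) (pv z)) else 0.
Definition U0 (x z : E) : C :=
  if (sE z == sE x) && (tE z != tE x) then uv (sE x) (pv x) (pv z) else 0.
Definition Wblk (z w : E) : C :=
  if sE z == sE w then wv (sE z) (pv z) (pv w) else 0.

Lemma cnt_edge (a : {set V}) (i : V) : a \in F ->
  \sum_(e : D) (tgt e == i)%:R * (src e == a)%:R = (i \in a)%:R :> C.
Proof.
move=> aF; case ia: (i \in a).
  have pf : dedgeP F (a, i) by rewrite /dedgeP /= aF ia.
  pose e0 : D := exist _ (a, i) pf.
  rewrite (bigD1 e0) //= !eqxx mulr1 big1 ?addr0 // => e ne.
  case: (tgt e =P i) => [ti|]; last by rewrite mul0r.
  case: (src e =P a) => [sa|]; last by rewrite mulr0.
  by case/eqP: ne; apply: dedge_eq.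
rewrite big1 // => e _.
case: (tgt e =P i) => [ti|]; last by rewrite mul0r.
case: (src e =P a) => [sa|]; last by rewrite mulr0.
by have := tgt_src e; rewrite ti sa ia.
Qed.

Lemma SST (z : E) (y : E) : \sum_w Sop z w * STop w y = (pv z == pv y)%:R.
Proof. by rewrite /Sop /STop sum_ind eq_sym. Qed.

Lemma U0_eq (x z : E) : U0 x z = Ublk x z - (x == z)%:R.
Proof.
rewrite /U0 /Ublk [sE z == sE x]eq_sym.
case: (sE x =P sE z) => [hs|hs] /=; last first.
  case: eqP => [xz|]; last by rewrite subr0.
  by case: hs; rewrite xz.
rewrite [tE z == tE x]eq_sym.
case: (tE x =P tE z) => [ht|ht] /=.
  case: (pv x =P pv z) => [hp|hp].
    by rewrite (Eidx_eq hs hp) eqxx subrr.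
  case: eqP => [xz|_]; first by case: hp; rewrite xz.
  by rewrite subrr.
case: eqP => [xz|_]; last by rewrite subr0.
by case: ht; rewrite xz.
Qed.

Lemma Mop_eq (x y : E) :
  Mop u x y = \sum_z U0 x z * ((\sum_w Sop z w * STop w y) - (z == y)%:R).
Proof.
under eq_bigr do rewrite SST mulrBr.
rewrite sumrB.
have -> : \sum_z U0 x z * (z == y)%:R = U0 x y.
  by under eq_bigr do rewrite mulrC eq_sym; rewrite sum_ind.
rewrite sumE.
pose K := uv (sE x) (pv x) (pv y).
pose c' := if tE y != tE x then K else 0.
have h1 : forall e : D, \sum_(p : 'I_(r (tgt e)))
     U0 x (Tagged (fun e => 'I_(r (tgt e))) p) * (pv (Tagged (fun e => 'I_(r (tgt e))) p) == pv y)%:R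
   = (tgt e == tE y)%:R * ((src e == sE x)%:R * c').
  move=> e; under eq_bigr do rewrite mulrC.
  apply: sum_fiber => p hp.
  rewrite /U0 /c' /K /sE /tE /=.
  have ht : tgt e = tE y := congr1 tag hp.
  rewrite /pv /= in hp *; rewrite hp ht.
  by case: (src e == _); rewrite ?mul1r ?mul0r //=; case: (_ != _).
under eq_bigr do rewrite h1 mulrA.
rewrite -big_distrl /= cnt_edge ?srcF //.
rewrite /Mop /follows /U0 /c' /K -/(sE x) -/(sE y) -/(tE x) -/(tE y).
rewrite -[u _ _ _ _ _]/(uv (sE x) (pv x) (pv y)).
have hy : tE y \in sE y := tgt_src (tag y).
case: (sE y =P sE x) => [hs|hs].
  rewrite hs in hy; rewrite hy /= ?andbF ?andbT mul1r.
  by case: (_ != _); rewrite subrr.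
rewrite andbT subr0.
by case: (tE y \in sE x); case: (_ != _); rewrite /= ?mul1r ?mul0r.
Qed.

Lemma card_tgt (i : V) : #|[set e : D | tgt e == i]| = vdeg F i.
Proof.
rewrite /vdeg.
have -> : [set a in F | i \in a] = (fun e : D => src e) @: [set e : D | tgt e == i].
  apply/setP => a; rewrite !inE; apply/andP/imsetP.
    case=> aF ia.
    have pf : dedgeP F (a, i) by rewrite /dedgeP /= aF ia.
    by exists (exist _ (a, i) pf); rewrite // inE.
  case=> e; rewrite inE => /eqP ti ->; split; first exact: srcF.
  by rewrite -ti tgt_src.
rewrite card_in_imset // => e1 e2; rewrite !inE => /eqP t1 /eqP t2 hs.
by apply: dedge_eq; rewrite // t1 t2.
Qed.

Lemma sum_pv (x : Vx) : \sum_(z : E) (pv z == x)%:R = (vdeg F (tag x))%:R :> C.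
Proof.
rewrite sumE.
have h : forall e : D, \sum_(p : 'I_(r (tgt e)))
    (pv (Tagged (fun e => 'I_(r (tgt e))) p) == x)%:R = (tgt e == tag x)%:R :> C.
  move=> e; rewrite -[RHS]mulr1 -(@sum_fiber (tgt e) x (fun _ => 1) 1) //.
  by apply: eq_bigr => p _; rewrite mulr1.
under eq_bigr do rewrite h.
rewrite -card_tgt -sum1_card.
rewrite (big_mkcond (fun e : D => e \in [set e : D | tgt e == tag x])) /= natr_sum.
by apply: eq_bigr => e _; rewrite inE; case: (_ == _).
Qed.

Lemma D_eq (x y : Vx) : \sum_z STop x z * Sop z y = Dop F R x y.
Proof.
rewrite /STop /Sop /Dop.
case: (x =P y) => [<-|nxy].
  under eq_bigr do rewrite -natrM mulnb andbb.
  by rewrite sum_pv mul1r.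
rewrite mul0r big1 // => z _.
case: (pv z =P x) => [zx|]; last by rewrite mul0r.
by case: (pv z =P y) => [zy|]; [case: nxy; rewrite -zx -zy|rewrite mulr0].
Qed.

Lemma W_eq (x y : Vx) :
  \sum_z STop x z * (\sum_w Wblk z w * Sop w y) = Wop F u x y.
Proof.
pose G (z : E) := \sum_(e' : D) (tgt e' == tag y)%:R *
                   ((sE z == src e')%:R * wv (sE z) (pv z) y).
have hG : forall z, \sum_w Wblk z w * Sop w y = G z.
  move=> z; rewrite sumE /G; apply: eq_bigr => e' _.
  under eq_bigr do rewrite mulrC.
  apply: sum_fiber => q hq.
  rewrite /Wblk /sE /=.
  rewrite /pv /= in hq *; rewrite hq.
  by case: (_ == _); rewrite ?mul1r ?mul0r.
under eq_bigr do rewrite hG.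
rewrite sumE /Wop.
rewrite (big_mkcond (fun e : D => tgt e == tag x)) /=.
apply: eq_bigr => e _.
transitivity ((tgt e == tag x)%:R *
   (\sum_(e' : D) (tgt e' == tag y)%:R * ((src e == src e')%:R * wv (src e) x y))).
  apply: sum_fiber => p hp; rewrite /G /sE /=.
  by rewrite /pv /= hp.
case: (tgt e == tag x); rewrite ?mul1r ?mul0r //.
rewrite [RHS]big_mkcond /=; apply: eq_bigr => e' _.
rewrite [src e' == src e]eq_sym.
by case: (src e == src e'); case: (tgt e' == tag y); rewrite /= ?mul1r ?mul0r ?mulr0.
Qed.

Lemma Vx_eqE (v w : Vx) : tag v = tag w ->
  (v == w) = (val (tagged v) == val (tagged w)).
Proof.
case: v => i p; case: w => j q /= e; subst j.
by rewrite eq_Tagged /=.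
Qed.

Definition toE (a : {set V}) (aF : a \in F) (x : Aidx r a) : E :=
  Tagged (fun e : D => 'I_(r (tgt e)))
    (i := exist _ (a, tag (val x)) (introT andP (conj aF (valP x)) : dedgeP F (a, tag (val x))))
    (tagged (val x)).

Lemma sE_toE a (aF : a \in F) x : sE (toE aF x) = a.
Proof. by []. Qed.

Lemma pv_toE a (aF : a \in F) x : pv (toE aF x) = val x.
Proof. by case: x => -[i p]. Qed.

Lemma toE_inj a (aF : a \in F) : injective (toE aF).
Proof. by move=> x y /(congr1 pv); rewrite !pv_toE => /val_inj. Qed.

Lemma toE_surj a (aF : a \in F) (z : E) : sE z = a -> exists x, z = toE aF x.
Proof.
move=> sz.
have pf : tag (pv z) \in a by rewrite -sz; exact: tgt_src.
exists (exist _ (pv z) pf); apply: Eidx_eq; first by rewrite sz.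
by rewrite pv_toE.
Qed.

Lemma Ublk_toE a (aF : a \in F) x y : Ublk (toE aF x) (toE aF y) = Uop u x y.
Proof.
rewrite /Ublk /Uop !sE_toE eqxx.
rewrite /tE /=.
case: eqP => [h|h] //.
by rewrite Vx_eqE !pv_toE.
Qed.

Lemma fdet_pdet (T : finType) (A : T -> T -> C) : fdet A = pdet [set: T] A.
Proof.
rewrite (pdet_bij A (P := [set: T]) (g := fun i : 'I_#|T| => enum_val i)) //.
- by move=> i j /enum_val_inj.
- by move=> x xT; exists (enum_rank x); rewrite enum_rankK.
Qed.

Lemma detU : fdet Ublk = \prod_(a in F) \det (Umx u a).
Proof.
rewrite fdet_pdet (_ : [set: E] = sE @^-1: F); last first.
  by apply/setP => z; rewrite !inE srcF.
rewrite (pdet_blocks (c := sE)); last by move=> x y; rewrite /Ublk => /negbTE ->.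
apply: eq_bigr => a aF.
rewrite (@pdet_bij _ _ _ _ _ (fun k : 'I_#|Aidx r a| => toE aF (enum_val k))).
- congr (\det _); apply/matrixP => i j.
  by rewrite /Umx /fmx !mxE Ublk_toE.
- by move=> i j /toE_inj /enum_val_inj.
- by move=> i; rewrite !inE sE_toE.
- move=> z; rewrite !inE => /eqP /(toE_surj aF) [x ->].
  by exists (enum_rank x); rewrite enum_rankK.
Qed.

Lemma sum_inj (T T' : finType) (P : pred T) (g : T' -> T) (f : T -> C) :
  injective g -> (forall k, P (g k)) -> (forall z, P z -> exists k, z = g k) ->
  \sum_(z | P z) f z = \sum_k f (g k).
Proof.
move=> gi gP gs.
transitivity (\sum_(k in [set: T']) f (g k)); last by apply: eq_bigl => k; rewrite inE.
rewrite -(big_imset (h := g) (A := [set: T']) f); last by move=> ? ? _ _; exact: gi.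
apply: eq_bigl => z; apply/idP/imsetP => [/gs [k ->]|[k _ ->]]; last exact: gP.
by exists k.
Qed.

Lemma wv_val a (x y : Aidx r a) :
  wv a (val x) (val y) = invmx (Umx u a) (enum_rank x) (enum_rank y).
Proof.
case: x => -[i p] ip; case: y => -[j q] jq.
by rewrite /wv /wblk /= !insubT /=.
Qed.

Lemma Uop_mx a (x y : Aidx r a) : Uop u x y = Umx u a (enum_rank x) (enum_rank y).
Proof. by rewrite /Umx /fmx mxE !enum_rankK. Qed.

Lemma UW (HU : forall a : {set V}, a \in F -> Umx u a \in unitmx) (x y : E) :
  \sum_z Ublk x z * Wblk z y = (x == y)%:R.
Proof.
pose a := sE x; have aF : a \in F := srcF (tag x).
have [x1 ->] := toE_surj aF (erefl a).
rewrite (bigID (fun z => sE z == a)) /= [X in _ + X]big1 ?addr0; last first.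
  move=> z nz; rewrite /Ublk sE_toE eq_sym (negbTE nz) mul0r //.
rewrite (@sum_inj _ _ _ (toE aF)); first last.
- by move=> z /eqP /(toE_surj aF).
- by move=> k; rewrite sE_toE.
- exact: toE_inj.
case: (sE y =P a) => [ya|ya]; last first.
  rewrite big1; last by move=> k _; rewrite /Wblk sE_toE; case: eqP => // h; [case: ya; rewrite -h | rewrite mulr0].
  case: eqP => // h; case: ya; by rewrite -h.
have [y1 ->] := toE_surj aF ya.
under eq_bigr do rewrite Ublk_toE /Wblk !sE_toE eqxx !pv_toE wv_val Uop_mx.
rewrite (inj_eq (@toE_inj _ aF)).
rewrite (big_enum_val (A := Aidx r a)
  (fun k => Umx u a (enum_rank x1) (enum_rank k) * invmx (Umx u a) (enum_rank k) (enum_rank y1))) /=.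
under eq_bigr do rewrite enum_valK.
have := mulmxV (HU a aF); move/matrixP => /(_ (enum_rank x1) (enum_rank y1)).
rewrite !mxE => ->.
by rewrite (inj_eq enum_rank_inj).
Qed.

End Hyp.

Unset Implicit Arguments.
Set Strict Implicit.

Theorem theorem3 (V : finType) (F : {set {set V}})
  (HF : forall a : {set V}, a \in F -> a != set0)
  (R : realType) (r : V -> nat) (Hr : forall k : V, (0 < r k)%N)
  (u : forall (a : {set V}) (k l : V), 'M[R[i]]_(r l, r k))
  (HU : forall a : {set V}, a \in F -> Umx u a \in unitmx) :
  fdet (fun x y : Eidx F r => idmx_op R x y - Mop (F:=F) u x y)
  = fdet (fun x y : Vidx r => idmx_op R x y - Dop F R x y + Wop F u x y)
    * \prod_(a in F) \det (Umx u a).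
Proof.
have fd : forall (T : finType) (A : T -> T -> R[i]), fdet A = \det (fmxr A) by [].
set Um := fmxr (Ublk (F:=F) u).
set Wm := fmxr (Wblk (F:=F) u).
set Sm := fmxr (Sop (F:=F) R (r:=r)).
set STm := fmxr (STop (F:=F) R (r:=r)).
have hid : forall T : finType, fmxr (idmx_op R (T:=T)) = 1%:M.
  by move=> T; rewrite -fmxr_id.
have hUW : Um *m Wm = 1%:M.
  rewrite /Um /Wm -fmxr_mul -(fmxr_id (R[i]) (Eidx F r)); apply: fmxr_ext => x y.
  exact: UW.
have hM : fmxr (Mop u) = (Um - 1%:M) *m (Sm *m STm - 1%:M).
  rewrite /Um /Sm /STm -hid -!fmxr_sub -fmxr_mul -fmxr_sub -fmxr_mul.
  apply: fmxr_ext => x y; rewrite Mop_eq; apply: eq_bigr => z _.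
  by rewrite U0_eq.
have hD : fmxr (Dop F R (r:=r)) = STm *m Sm.
  by rewrite /STm /Sm -fmxr_mul; apply: fmxr_ext => x y; rewrite D_eq.
have hW : fmxr (Wop F u) = STm *m (Wm *m Sm).
  by rewrite /STm /Sm /Wm -!fmxr_mul; apply: fmxr_ext => x y; rewrite W_eq.
rewrite !fd fmxr_sub fmxr_add fmxr_sub hid hM hD hW.
rewrite -(detU F u) fd -/Um.
have -> : 1%:M - (Um - 1%:M) *m (Sm *m STm - 1%:M)
   = Um *m (1%:M - ((1%:M - Wm) *m Sm) *m STm).
  rewrite [in RHS]mulmxBr [in RHS]mulmx1 !mulmxA [Um *m (_ - _)]mulmxBr mulmx1 hUW -mulmxA.
  rewrite [(_ - 1%:M) *m (_ - 1%:M)]mulmxBr mulmx1.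
  by rewrite opprB addrA [1%:M + _]addrC subrK.
rewrite det_mulmx mulrC; congr (_ * _).
rewrite hid sylvester mulmxA [STm *m (_ - _)]mulmxBr mulmx1 mulmxBl -mulmxA.
by rewrite opprB addrA addrAC.
Qed.
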